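(* Fix $k\in\mathbb{Z}_{\geq0}$. For integers $0\leq i\leq r\leq k$, in $\mathcal{A}_k$ we have $$h_{r-i}e_i=\underline{V_i^r}+\underline{V_{i-1}^r}+\underline{U_{i-1}^r}.$$
   Context: Indices are elements of $\mathbb{Z}/(k+1)\mathbb{Z}$, identified with $[0,k]$. $\mathcal{A}_k$ is the associative $\mathbb{Z}$-algebra with generators $A_0,\dots,A_k$ subject only to $A_iA_{i+1}A_i=A_{i+1}A_iA_{i+1}$ for all $i$ and $A_iA_j=A_jA_i$ whenever $i-j\not\equiv\pm1\pmod{k+1}$. A word $A_{i_1\dots i_m}$ is a sequence of indices with value $A_{i_1}\cdots A_{i_m}$, weak length $m$ and support $\{i_1,\dots,i_m\}$. For a proper subset $A\subsetneq[0,k]$ with $|A|=s$, $d_A=A_{i_1\dots i_s}$ and $i_A=A_{i_s\dots i_1}$, where $(i_1,\dots,i_s)$ is any ordering of $A$ such that whenever $i,i+1\in A$, $i+1$ occurs before $i$ (these do not depend on the choice; $d_\emptyset=i_\emptyset=1$). Noncommutative symmetric functions: $h_s=\sum_{A\in\binom{[0,k]}{s}}d_A$ and $e_s=\sum_{A\in\binom{[0,k]}{s}}i_A$. For a proper subset $S$, with $a$ the smallest element of $[0,k]$ not in $S$, $I_S$ is the total order $a+1<\dots<k<0<\dots<a-1$. A word $u=A_{i_1\dots i_m}$ with proper support is a weak hook word of hook type $V$ (resp. $U$) if with respect to $I_{supp(u)}$, for some $j$, $i_1>\dots>i_j<i_{j+1}<\dots<i_m$ (resp. $i_1>\dots>i_j=i_{j+1}<\dots<i_m$);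 $asc(u)$ is the number of $t$ with $i_t<i_{t+1}$. $X^r_i$ ($X\in\{U,V\}$) is the set of weak hook words of hook type $X$, length $r$, and $asc=i$ (empty for $i<0$). For a finite set $S$ of words, $\underline{S}=\sum_{u\in S}u\in\mathcal{A}_k$. *)

(* Defs.v *)
From mathcomp Require Import all_boot all_order all_algebra.
Set Implicit Arguments. Unset Strict Implicit. Unset Printing Implicit Defensive.
Import GRing.Theory Num.Theory.
Local Open Scope ring_scope.

(* Indices are elements of Z/(k+1)Z, represented by 'I_k.+1. *)
Definition word (k : nat) := seq 'I_k.+1.

(* Formal Z-linear combinations of words: elements of the free associative
   Z-algebra on A_0..A_k, represented as lists of (coefficient, word). *)
Definition fsum (k : nat) := seq (int * word k).

Definition coef k (e : fsum k) (w : word k) : int :=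
  \sum_(t <- e) (if t.2 == w then t.1 else 0).

Definition fadd k (e1 e2 : fsum k) : fsum k := e1 ++ e2.
Definition fmul k (e1 e2 : fsum k) : fsum k :=
  [seq (t1.1 * t2.1, t1.2 ++ t2.2) | t1 <- e1, t2 <- e2].
(* the underline of a finite list of (distinct) words *)
Definition fwords k (ws : seq (word k)) : fsum k := [seq (1, w) | w <- ws].

(* Defining relations of A_k:  A_i A_{i+1} A_i = A_{i+1} A_i A_{i+1} for all i,
   and A_i A_j = A_j A_i whenever i - j is not congruent to +-1 mod k+1. *)
Definition is_rel k (l r : word k) : bool :=
  [exists i : 'I_k.+1, (l == [:: i; ordS i; i]) && (r == [:: ordS i; i; ordS i])]
  || [exists i : 'I_k.+1, exists j : 'I_k.+1,
        [&& ordS i != j, ordS j != i & (l == [:: i; j]) && (r == [:: j; i])]].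

(* A generator u (l - r) v of the two-sided ideal, with coefficient c *)
Definition ideal_term k (t : int * word k * (word k * word k) * word k) (w : word k) : int :=
  let: (c, u, (l, r), v) := t in
  c * (((u ++ l ++ v) == w)%:R - ((u ++ r ++ v) == w)%:R).

(* Equality in A_k = free algebra modulo the two-sided ideal generated by the
   relations: e1 - e2 is a Z-linear combination of elements u (l - r) v. *)
Definition eqA k (e1 e2 : fsum k) : Prop :=
  exists s : seq (int * word k * (word k * word k) * word k),
    all (fun t => is_rel t.1.2.1 t.1.2.2) s /\
    forall w : word k, coef e1 w - coef e2 w = \sum_(t <- s) ideal_term t w.

(* a = smallest element of [0,k] not in S (for S proper) *)
Definition mex k (S : {set 'I_k.+1}) : nat :=
  find (fun n => (inord n : 'I_k.+1) \notin S) (iota 0 k.+1).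

(* position of x in the total order I_S : a+1 < ... < k < 0 < ... < a-1 *)
Definition rk k (S : {set 'I_k.+1}) (x : 'I_k.+1) : nat :=
  ((x + k - mex S) %% k.+1)%N.

(* d_A : elements of A in decreasing I_A-order (then i+1 precedes i whenever
   i, i+1 in A); i_A is the reverse word. *)
Definition dA k (A : {set 'I_k.+1}) : word k :=
  sort (fun x y => (rk A y <= rk A x)%N) (enum A).
Definition iA k (A : {set 'I_k.+1}) : word k := rev (dA A).

Definition ncsym_h k (s : nat) : fsum k :=
  fwords [seq dA A | A <- enum [pred A : {set 'I_k.+1} | #|A| == s]].
Definition ncsym_e k (s : nat) : fsum k :=
  fwords [seq iA A | A <- enum [pred A : {set 'I_k.+1} | #|A| == s]].

Definition supp k (u : word k) : {set 'I_k.+1} := [set x | x \in u].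
Definition proper_supp k (u : word k) : bool := supp u != [set: 'I_k.+1].

Definition ltI k (u : word k) (x y : 'I_k.+1) : bool := (rk (supp u) x < rk (supp u) y)%N.
Definition gtI k (u : word k) (x y : 'I_k.+1) : bool := ltI u y x.

(* hook type V: i_1 > ... > i_j < i_{j+1} < ... < i_m (w.r.t. I_supp(u)) *)
Definition hookV k (u : word k) : bool :=
  [exists j : 'I_(size u).+1,
     sorted (gtI u) (take j u) && sorted (ltI u) (drop j.-1 u)].
(* hook type U: i_1 > ... > i_j = i_{j+1} < ... < i_m, 1 <= j < m *)
Definition hookU k (u : word k) : bool :=
  [exists j : 'I_(size u),
     [&& (0 < j)%N, nth ord0 u j.-1 == nth ord0 u j,
         sorted (gtI u) (take j u) & sorted (ltI u) (drop j u)]].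

Definition asc k (u : word k) : nat :=
  \sum_(t < (size u).-1) (ltI u (nth ord0 u t) (nth ord0 u t.+1)).

(* underline of X^r_i (X = V or U), i an integer (empty set if i < 0) *)
Definition Vset k (r : nat) (i : int) : fsum k :=
  fwords [seq val t | t <- enum [pred t : r.-tuple 'I_k.+1 |
            [&& proper_supp (val t), hookV (val t) & (asc (val t))%:Z == i]]].
Definition Uset k (r : nat) (i : int) : fsum k :=
  fwords [seq val t | t <- enum [pred t : r.-tuple 'I_k.+1 |
            [&& proper_supp (val t), hookU (val t) & (asc (val t))%:Z == i]]].

Arguments ncsym_h : clear implicits.
Arguments ncsym_e : clear implicits.
Arguments Vset : clear implicits.
Arguments Uset : clear implicits.

(* Main.v *)
Require Import Defs.
From mathcomp Require Import all_boot all_order all_algebra.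
From mathcomp Require Import zify.
Set Implicit Arguments. Unset Strict Implicit. Unset Printing Implicit Defensive.
Import GRing.Theory Num.Theory.
Section Alg.
Variable k : nat.
Local Notation W := (word k).

Lemma coef_cat (e1 e2 : fsum k) w : coef (e1 ++ e2) w = (coef e1 w + coef e2 w)%R.
Proof. by rewrite /coef big_cat. Qed.

Lemma eqA_coef (e1 e2 : fsum k) : (forall w, coef e1 w = coef e2 w) -> eqA e1 e2.
Proof. by move=> H; exists [::]; split=> // w; rewrite H subrr big_nil. Qed.

Lemma eqA_trans (e1 e2 e3 : fsum k) : eqA e1 e2 -> eqA e2 e3 -> eqA e1 e3.
Proof.
case=> s1 [a1 h1] [s2 [a2 h2]]; exists (s1 ++ s2); split; first by rewrite all_cat a1 a2.
by move=> w; rewrite big_cat /= -h1 -h2 addrA subrK.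
Qed.

Lemma eqA_cat (e1 e2 f1 f2 : fsum k) : eqA e1 e2 -> eqA f1 f2 -> eqA (e1 ++ f1) (e2 ++ f2).
Proof.
case=> s1 [a1 h1] [s2 [a2 h2]]; exists (s1 ++ s2); split; first by rewrite all_cat a1 a2.
by move=> w; rewrite big_cat /= !coef_cat -h1 -h2 opprD addrACA.
Qed.

Inductive conv : W -> W -> Prop :=
| cv_refl u : conv u u
| cv_step p l r q v : is_rel l r -> conv (p ++ r ++ q) v -> conv (p ++ l ++ q) v.

Lemma conv_trans u v w : conv u v -> conv v w -> conv u w.
Proof. by elim=> // p l r q v' hr _ IH /IH; apply: cv_step. Qed.

Lemma conv_ctx a b u v : conv u v -> conv (a ++ u ++ b) (a ++ v ++ b).
Proof.
elim=> [u'|p l r q v' hr _ IH]; first exact: cv_refl.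
have -> : a ++ (p ++ l ++ q) ++ b = (a ++ p) ++ l ++ (q ++ b) by rewrite !catA.
apply: cv_step hr _.
by have <- : a ++ (p ++ r ++ q) ++ b = (a ++ p) ++ r ++ (q ++ b) by rewrite !catA.
Qed.

Lemma conv_cat u u' v v' : conv u u' -> conv v v' -> conv (u ++ v) (u' ++ v').
Proof.
move=> h1 h2; apply: (@conv_trans _ (u' ++ v)).
  by have := conv_ctx [::] v h1; rewrite /= .
by have := conv_ctx u' [::] h2; rewrite !cats0.
Qed.

Lemma coef1 (u w : W) : coef [:: (1%R, u)] w = if u == w then 1%R else 0%R.
Proof. by rewrite /coef big_cons big_nil addr0. Qed.

Lemma conv_eqA u v : conv u v -> eqA [:: (1%R, u)] [:: (1%R, v)].
Proof.
elim=> [u'|p l r q v' hr _ IH]; first by apply: eqA_coef.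
apply: eqA_trans IH.
exists [:: (1%R, p, (l, r), q)]; split; first by rewrite /= hr.
move=> w; rewrite !coef1 big_cons big_nil addr0 /= mul1r.
by case: (_ == w); case: (_ == w).
Qed.

Lemma eqA_map (T : eqType) (l : seq T) (F G : T -> W) :
  (forall p, p \in l -> conv (F p) (G p)) ->
  eqA (fwords [seq F p | p <- l]) (fwords [seq G p | p <- l]).
Proof.
elim: l => [|a l IH] H; first by apply: eqA_coef.
apply: (@eqA_cat [:: (1%R, F a)] [:: (1%R, G a)]).
  by apply: conv_eqA; apply: H; rewrite mem_head.
by apply: IH => p hp; apply: H; rewrite in_cons hp orbT.
Qed.

Lemma conv_swap p q (a b : 'I_k.+1) : (ordS a != b) && (ordS b != a) ->
  conv (p ++ [:: a; b] ++ q) (p ++ [:: b; a] ++ q).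
Proof.
move=> /andP[h1 h2]; apply: cv_step (cv_refl _).
apply/orP; right; apply/existsP; exists a; apply/existsP; exists b.
by rewrite h1 h2 !eqxx.
Qed.

Lemma conv_push x t1 t2 : (forall y, y \in t1 -> (ordS x != y) && (ordS y != x)) ->
  conv (t1 ++ x :: t2) (x :: t1 ++ t2).
Proof.
elim: t1 => [|y t1 IH] H /=; first exact: cv_refl.
apply: (@conv_trans _ (y :: x :: t1 ++ t2)).
  have := conv_ctx [:: y] [::] (IH (fun z hz => H z (@mem_behead _ (y :: t1) _ hz))).
  by rewrite !cats0.
have := @conv_swap [::] (t1 ++ t2) y x; rewrite /=; apply.
by have := H y (mem_head _ _); rewrite andbC.
Qed.

Lemma two_order (t : W) x y : uniq t -> subseq [:: x; y] t -> subseq [:: y; x] t -> x = y.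
Proof.
elim: t => //= z t IH /andP[zt ut].
case: (x =P z) => [->|nx]; case: (y =P z) => [->|ny] //.
- by move=> _ /mem_subseq/(_ z ltac:(by rewrite !inE eqxx orbT)); rewrite (negbTE zt).
- by move=> /mem_subseq/(_ z ltac:(by rewrite !inE eqxx orbT)); rewrite (negbTE zt).
- exact: IH.
Qed.

Lemma sub2_cat (t1 t2 : W) x y : y \in t1 -> subseq [:: y; x] (t1 ++ x :: t2).
Proof.
move=> yt; have -> : [:: y; x] = [:: y] ++ [:: x] by [].
by apply: cat_subseq; rewrite sub1seq // mem_head.
Qed.

Lemma conv_perm (s t : W) : uniq s -> uniq t -> perm_eq s t ->
  (forall x y, x \in s -> y \in s -> x != y -> ~~ ((ordS x != y) && (ordS y != x)) ->
     subseq [:: x; y] t -> subseq [:: x; y] s) -> conv t s.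
Proof.
elim: s t => [|x s IH] t us ut pst H.
  by move: (perm_size pst); case: t {pst ut H} => // _; exact: cv_refl.
have xt : x \in t by rewrite -(perm_mem pst) mem_head.
case/splitPr: xt pst ut H => t1 t2 pst ut H.
have pm : perm_eq (t1 ++ x :: t2) (x :: t1 ++ t2) by rewrite (perm_catCA t1 [:: x] t2) perm_refl.
move: (us) => /andP[xs us'].
apply: (@conv_trans _ (x :: t1 ++ t2)).
  apply: conv_push => y yt1.
  have xny : x != y.
    apply/eqP => exy; move: ut; rewrite cat_uniq => /and3P[_ /hasPn/(_ x)].
    by rewrite mem_head exy yt1 => /(_ isT).
  apply/negPn/negP => hadj.
  have ys : y \in x :: s by rewrite (perm_mem pst) mem_cat yt1.
  have := H y x ys (mem_head _ _) ltac:(by rewrite eq_sym) ltac:(by rewrite andbC).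
  move=> /(_ (sub2_cat _ _ yt1)) /=; rewrite eq_sym (negbTE xny).
  by move/mem_subseq/(_ x ltac:(by rewrite !inE eqxx orbT)); rewrite (negbTE xs).
have ut' : uniq (t1 ++ t2) by move: ut; rewrite (perm_uniq pm) => /andP[].
have := conv_ctx [:: x] [::] (IH (t1 ++ t2) us' ut' _ _); rewrite !cats0; apply.
  by move: (perm_trans pst pm); rewrite perm_cons.
move=> a b ha hb nab hadj sab.
have : subseq [:: a; b] (x :: s).
  apply: H => //; try by rewrite in_cons ?ha ?hb orbT.
  apply: subseq_trans sab _; apply: cat_subseq => //; exact: subseq_cons.
rewrite /=; have -> : (a == x) = false by apply/eqP => eax; rewrite -eax ha in xs.
by [].
Qed.

End Alg.
Section Rk.
Variable k : nat.
Implicit Types (S X A B : {set 'I_k.+1}) (x y : 'I_k.+1).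

Lemma proper_card S : (#|S| <= k)%N -> S != setT.
Proof. by move=> h; apply/eqP => e; move: h; rewrite e cardsT card_ord ltnn. Qed.

Lemma mex_has S : S != setT -> has (fun n => (inord n : 'I_k.+1) \notin S) (iota 0 k.+1).
Proof.
move=> nT; case: (pickP (fun x => x \notin S)) => [x xS | all].
  by apply/hasP; exists (val x); rewrite ?mem_iota ?ltn_ord // inord_val.
case/eqP: nT; apply/setP => x; rewrite inE; move: (all x) => /=.
by case: (x \in S).
Qed.

Lemma mex_le S : S != setT -> (mex S <= k)%N.
Proof. by move=> /mex_has; rewrite has_find size_iota. Qed.

Lemma mex_neq S x : S != setT -> x \in S -> val x != mex S.
Proof.
move=> nT xS; apply/eqP => e.
have := nth_find 0%N (mex_has nT); rewrite -/(mex S) nth_iota ?add0n; last first.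
  by rewrite -(size_iota 0 k.+1) -has_find mex_has.
by rewrite -e inord_val xS.
Qed.

Lemma rkE S x : S != setT ->
  rk S x = if (mex S < x)%N then (x - mex S - 1)%N else (x + k - mex S)%N.
Proof.
move=> /mex_le h; rewrite /rk; have := ltn_ord x; case: (ltnP (mex S) x) => h2 h3.
  have -> : (x + k - mex S = (x - mex S - 1) + k.+1)%N by lia.
  by rewrite modnDr modn_small //; lia.
by rewrite modn_small //; lia.
Qed.

Lemma ordS_val x : nat_of_ord (ordS x) = if val x == k then 0%N else (val x).+1.
Proof.
rewrite /=; case: eqP => [->|h]; first by rewrite modnn.
by rewrite modn_small //; have := ltn_ord x; lia.
Qed.

Lemma ordS_val' x : \val (ordS x) = if val x == k then 0%N else (val x).+1.
Proof. exact: ordS_val. Qed.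

Lemma rk_inj S : S != setT -> injective (rk S).
Proof.
move=> nT x y; rewrite !rkE //; have := mex_le nT; have := ltn_ord x; have := ltn_ord y.
move=> hx hy hm e; apply: val_inj => /=; move: e.
by case: (ltnP (mex S) x); case: (ltnP (mex S) y); lia.
Qed.

Lemma rk_succ_nat (x a : nat) : (x < k.+1)%N -> (a <= k)%N -> x != a ->
  (if x == k then 0%N else x.+1) != a -> x != (if x == k then 0%N else x.+1) ->
  ((if (a < x)%N then (x - a - 1)%N else (x + k - a)%N) <
   (if (a < (if x == k then 0%N else x.+1))%N then ((if x == k then 0%N else x.+1) - a - 1)%N
    else ((if x == k then 0%N else x.+1) + k - a)%N))%N.
Proof.
case: (x =P k) => [->|ne] h1 h2 h3 h4 h5.
  by rewrite ltn0; case: (ltnP a k) => h6; lia.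
by case: (ltnP a x) => h6; case: (ltnP a x.+1) => h7; lia.
Qed.

Lemma rk_succ S x : S != setT -> x \in S -> ordS x \in S -> x != ordS x ->
  (rk S x < rk S (ordS x))%N.
Proof.
move=> nT xS sS nx; have := mex_neq nT xS; have := mex_neq nT sS.
move: nx; rewrite -val_eqE !rkE // ?ordS_val' ?ordS_val => h1 h2 h3.
by apply: rk_succ_nat => //; exact: mex_le.
Qed.

Definition keyle S := fun x y : 'I_k.+1 => (rk S y <= rk S x)%N.
Definition dec S X := sort (keyle S) (enum X).
Definition Wd A B := dec (A :|: B) A ++ rev (dec (A :|: B) B).

Lemma dA_dec A : dA A = dec A A. Proof. by []. Qed.
Lemma iA_dec A : iA A = rev (dec A A). Proof. by []. Qed.

Lemma perm_dec S X : perm_eq (dec S X) (enum X).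
Proof. by rewrite /dec perm_sort perm_refl. Qed.
Lemma mem_dec S X y : (y \in dec S X) = (y \in X).
Proof. by rewrite (perm_mem (perm_dec S X)) mem_enum. Qed.
Lemma uniq_dec S X : uniq (dec S X).
Proof. by rewrite (perm_uniq (perm_dec S X)) enum_uniq. Qed.
Lemma size_dec S X : size (dec S X) = #|X|.
Proof. by rewrite (perm_size (perm_dec S X)) cardE. Qed.
Lemma sorted_dec S X : sorted (keyle S) (dec S X).
Proof. by apply: sort_sorted => a b; rewrite /keyle leq_total. Qed.

Lemma sorted_strict (T : eqType) (le lt : rel T) (s : seq T) : sorted le s -> uniq s ->
  (forall a b, a != b -> le a b -> lt a b) -> sorted lt s.
Proof.
case: s => //= a s; elim: s a => //= b s IH a /andP[hab hp] /andP[ha hu] H.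
rewrite H //; last by apply: contraNneq ha => ->; rewrite mem_head.
exact: IH.
Qed.

Lemma sorted_dec_lt S X : S != setT -> sorted (fun a b => rk S b < rk S a)%N (dec S X).
Proof.
move=> nT; apply: sorted_strict (sorted_dec S X) (uniq_dec S X) _ => a b nab.
rewrite /keyle leq_eqVlt => /orP[/eqP e|//]; case/eqP: nab; exact: (rk_inj nT).
Qed.

Lemma sorted_key_before (T : eqType) (f : T -> nat) (s : seq T) (x y : T) :
  sorted (fun a b => f b <= f a)%N s -> x \in s -> y \in s -> (f x < f y)%N ->
  subseq [:: y; x] s.
Proof.
elim: s => //= z s IH hs.
have allz : all (fun b => f b <= f z)%N s.
  by apply: (order_path_min _ hs) => a b c h1 h2; apply: leq_trans h2 h1.
rewrite !in_cons => hx hy hlt.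
case: (y =P z) => [eyz|nyz].
  rewrite sub1seq; case/orP: hx => // /eqP exz.
  by move: hlt; rewrite exz -eyz ltnn.
have ys : y \in s by case/orP: hy => // /eqP.
apply: IH => //; first exact: path_sorted hs.
case/orP: hx => // /eqP exz; move/allP: allz => /(_ y ys).
by rewrite -exz leqNgt hlt.
Qed.

Lemma good_dec S X x : X \subset S -> S != setT -> x \in X -> ordS x \in X -> x != ordS x ->
  subseq [:: ordS x; x] (dec S X).
Proof.
move=> sXS nT hx hs nx; apply: (sorted_key_before (f := rk S)).
- exact: sorted_dec.
- by rewrite mem_dec.
- by rewrite mem_dec.
by apply: rk_succ => //; apply: (subsetP sXS).
Qed.

Lemma conv_good (s t : word k) : uniq s -> uniq t -> perm_eq s t ->
  (forall x, x \in s -> ordS x \in s -> x != ordS x ->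
     subseq [:: ordS x; x] s /\ subseq [:: ordS x; x] t) -> conv t s.
Proof.
move=> us ut pst H; apply: conv_perm => // a b ha hb nab.
rewrite negb_and !negbK => /orP[/eqP e|/eqP e] sab.
- have [_ sba] := H a ha ltac:(by rewrite e) ltac:(by rewrite e).
  by case/eqP: nab; apply: (two_order ut sab); rewrite -e.
- have [sba _] := H b hb ltac:(by rewrite e) ltac:(by rewrite e eq_sym).
  by rewrite -e.
Qed.

Lemma conv_good_rev (s t : word k) : uniq s -> uniq t -> perm_eq s t ->
  (forall x, x \in s -> ordS x \in s -> x != ordS x ->
     subseq [:: ordS x; x] s /\ subseq [:: ordS x; x] t) -> conv (rev t) (rev s).
Proof.
move=> us ut pst H; apply: conv_perm; rewrite ?rev_uniq ?perm_rev' //.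
- by rewrite perm_rev; rewrite perm_sym perm_rev perm_sym.
move=> a b; rewrite !mem_rev => ha hb nab.
have -> : [:: a; b] = rev [:: b; a] by [].
rewrite !subseq_rev.
rewrite negb_and !negbK => /orP[/eqP e|/eqP e] sba.
- have [sab _] := H a ha ltac:(by rewrite e) ltac:(by rewrite e).
  by rewrite -e.
- have [_ sab] := H b hb ltac:(by rewrite e) ltac:(by rewrite e eq_sym).
  by case/eqP: nab; apply: (two_order ut _ sba); rewrite -e.
Qed.

Lemma conv_LW A B : (#|A :|: B| <= k)%N -> conv (dA A ++ iA B) (Wd A B).
Proof.
move=> hc; have nT := proper_card hc.
have sA : A \subset A :|: B by exact: subsetUl.
have sB : B \subset A :|: B by exact: subsetUr.
have nA : A != setT by apply: proper_card; apply: leq_trans hc; apply: subset_leq_card.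
have nB : B != setT by apply: proper_card; apply: leq_trans hc; apply: subset_leq_card.
apply: conv_cat.
  apply: conv_good; rewrite ?uniq_dec //.
    by rewrite (perm_trans (perm_dec _ _)) // perm_sym perm_dec.
  move=> x; rewrite !mem_dec => h1 h2 h3; split; exact: good_dec.
rewrite iA_dec; apply: conv_good_rev; rewrite ?uniq_dec //.
  by rewrite (perm_trans (perm_dec _ _)) // perm_sym perm_dec.
move=> x; rewrite !mem_dec => h1 h2 h3; split; exact: good_dec.
Qed.

End Rk.
Section Hook.
Variable k : nat.
Local Notation T := 'I_k.+1.
Implicit Types (u s : word k).

Fixpoint ascs (R : rel T) (a : T) (s : seq T) : nat :=
  if s is b :: s' then (R a b + ascs R b s')%N else 0%N.
Definition ascl (R : rel T) (s : seq T) : nat :=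
  if s is a :: s' then ascs R a s' else 0%N.

Lemma asc_ascl u : asc u = ascl (ltI u) u.
Proof.
rewrite /asc; case: u => [|a s] /=; first by rewrite big_ord0.
move: (ltI (a :: s)) => R.
elim: s a => [|b s IH] a /=; first by rewrite big_ord0.
by rewrite big_ord_recl /= -IH.
Qed.

Lemma ascs_cat (R : rel T) a (s1 s2 : seq T) : ascs R a (s1 ++ s2) = (ascs R a s1 + ascs R (last a s1) s2)%N.
Proof. by elim: s1 a => //= b s1 IH a; rewrite IH addnA. Qed.

Lemma ascl_split (R : rel T) (s1 : seq T) y s2 : ascl R (s1 ++ y :: s2) = (ascl R (rcons s1 y) + ascl R (y :: s2))%N.
Proof.
case: s1 => [|a s1] //=.
by rewrite ascs_cat -cats1 ascs_cat /= addn0 addnA.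
Qed.

Lemma ascs0 (R R' : rel T) a s : (forall b c, R' b c -> R b c = false) -> path R' a s -> ascs R a s = 0%N.
Proof. by move=> H; elim: s a => //= b s IH a /andP[h1 h2]; rewrite H // IH. Qed.

Lemma ascsS (R : rel T) a s : path R a s -> ascs R a s = size s.
Proof. by elim: s a => //= b s IH a /andP[h1 h2]; rewrite h1 IH. Qed.

Lemma ltI_trans u : transitive (ltI u).
Proof. by move=> b a c; rewrite /ltI; apply: ltn_trans. Qed.
Lemma gtI_trans u : transitive (gtI u).
Proof. by move=> b a c h1 h2; rewrite /gtI /ltI; apply: ltn_trans h2 h1. Qed.
Lemma ltI_irr u : irreflexive (ltI u).
Proof. by move=> a; rewrite /ltI ltnn. Qed.
Lemma gtI_irr u : irreflexive (gtI u).
Proof. by move=> a; rewrite /gtI /ltI ltnn. Qed.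

Lemma ascl0 u s : sorted (gtI u) s -> ascl (ltI u) s = 0%N.
Proof.
case: s => //= a s; apply: ascs0 => b c; rewrite /gtI /ltI => h.
by apply/negbTE; rewrite -leqNgt ltnW.
Qed.

Lemma asclS u s : sorted (ltI u) s -> ascl (ltI u) s = (size s).-1.
Proof. by case: s => //= a s; apply: ascsS. Qed.

Lemma sorted_adj (r : rel T) (s : seq T) t : sorted r s -> (t.+1 < size s)%N ->
  r (nth ord0 s t) (nth ord0 s t.+1).
Proof. by case: s => // a s /= /(pathP ord0) H ht; exact: H. Qed.

Lemma sorted_small (r : rel T) (s : seq T) : (size s <= 1)%N -> sorted r s.
Proof. by case: s => [|a [|b s]]. Qed.

Lemma sorted_rcons2 (r : rel T) (s : seq T) a b : sorted r (rcons s a) -> r a b ->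
  sorted r (rcons (rcons s a) b).
Proof.
case: s => [|c s] /=; first by move=> _ ->.
by rewrite !rcons_path last_rcons => -> ->.
Qed.

Lemma hookV_norm u : hookV u -> (0 < size u)%N -> exists j,
  [/\ (0 < j)%N, (j <= size u)%N, sorted (gtI u) (take j u) & sorted (ltI u) (drop j.-1 u)].
Proof.
case/existsP => j /andP[h1 h2] hs; case: (posnP j) => [j0|jp].
  exists 1%N; split => //; last by move: h2; rewrite j0.
  by apply: sorted_small; rewrite size_take_min geq_minl.
by exists (val j); split => //; rewrite -ltnS ltn_ord.
Qed.

Lemma asc_hookV u j : (0 < j)%N -> (j <= size u)%N -> sorted (gtI u) (take j u) ->
  sorted (ltI u) (drop j.-1 u) -> asc u = (size u - j)%N.
Proof.
case: j => // p _ jn ht hd /=.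
have e1 : u = take p u ++ nth ord0 u p :: drop p.+1 u by rewrite -drop_nth // cat_take_drop.
rewrite asc_ascl [X in ascl _ X]e1 ascl_split -take_nth // ascl0 // -drop_nth //.
by rewrite asclS // size_drop; lia.
Qed.

Lemma asc_hookU u j : (0 < j)%N -> (j < size u)%N -> nth ord0 u j.-1 = nth ord0 u j ->
  sorted (gtI u) (take j u) -> sorted (ltI u) (drop j u) -> asc u = (size u - j - 1)%N.
Proof.
case: j => // p _ jn /= e ht hd.
have e1 : u = take p u ++ nth ord0 u p :: drop p.+1 u by rewrite -drop_nth ?cat_take_drop //; lia.
have ed : drop p.+1 u = nth ord0 u p :: drop p.+2 u by rewrite e -drop_nth.
rewrite asc_ascl [X in ascl _ X]e1 ascl_split -take_nth; last by lia.
rewrite ascl0 // add0n [X in ascl _ (_ :: X)]ed /= ltI_irr add0n.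
have -> : ascs (ltI u) (nth ord0 u p) (drop p.+2 u) = ascl (ltI u) (drop p.+1 u) by rewrite ed.
by rewrite asclS // size_drop; lia.
Qed.

Definition SC m u := sorted (gtI u) (take m u) && sorted (ltI u) (drop m u).

Lemma SC_V1 u m : hookV u -> (asc u + m)%N = size u -> SC m u.
Proof.
case: (posnP (size u)) => [/size0nil -> //|hn] hV.
case: (hookV_norm hV hn) => j [j0 jn ht hd].
rewrite (asc_hookV j0 jn ht hd) => e.
have -> : m = j by lia.
rewrite /SC ht /=; apply: (@subseq_sorted _ (ltI u) (@ltI_trans u) (drop j u) (drop j.-1 u) _ hd).
have -> : drop j u = drop 1 (drop j.-1 u) by rewrite drop_drop; congr drop; lia.
exact: drop_subseq.
Qed.

Lemma SC_V2 u m : hookV u -> ((asc u).+1 + m)%N = size u -> SC m u.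
Proof.
case: (posnP (size u)) => [e0|hn] hV; first by rewrite e0.
case: (hookV_norm hV hn) => j [j0 jn ht hd].
rewrite (asc_hookV j0 jn ht hd) => e.
have ej : j = m.+1 by lia.
rewrite /SC; apply/andP; split; last by move: hd; rewrite ej.
apply: (@subseq_sorted _ (gtI u) (@gtI_trans u) (take m u) (take j u) _ ht).
by rewrite -(@take_takel _ m j u) ?take_subseq // ej.
Qed.

Lemma SC_U u m : hookU u -> ((asc u).+1 + m)%N = size u -> SC m u.
Proof.
case/existsP => j /and4P[jp /eqP e ht hd].
rewrite (asc_hookU jp (ltn_ord j) e ht hd) => e2.
have jn := ltn_ord j.
have -> : m = j by lia.
by rewrite /SC ht hd.
Qed.

Lemma hookVU u : hookV u -> hookU u -> False.
Proof.
case/existsP => j0 /andP[ht hd]; case/existsP => j /and4P[jp /eqP e _ _].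
have jn := ltn_ord j.
case: (ltnP j j0) => h.
  have := @sorted_adj _ _ j.-1 ht; rewrite size_take_min prednK //.
  rewrite !nth_take //; last by lia.
  by rewrite e gtI_irr => /(_ ltac:(lia)).
have := @sorted_adj _ _ (j.-1 - j0.-1) hd; rewrite size_drop !nth_drop.
have -> : (j0.-1 + (j.-1 - j0.-1) = j.-1)%N by lia.
have -> : (j0.-1 + (j.-1 - j0.-1).+1 = j)%N by lia.
by rewrite e ltI_irr => /(_ ltac:(lia)).
Qed.

Lemma card_supp u : (#|supp u| <= size u)%N.
Proof. by rewrite /supp cardsE card_size. Qed.

Lemma SC_hook u m : (size u <= k)%N -> (m <= size u)%N -> SC m u ->
  [|| hookV u && (asc u + m == size u)%N, hookV u && ((asc u).+1 + m == size u)%N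
    | hookU u && ((asc u).+1 + m == size u)%N].
Proof.
move=> hk hm /andP[ht hd].
have nT : supp u != setT by apply: proper_card; apply: leq_trans (card_supp u) hk.
rewrite /hookV /hookU.
case: (posnP m) => [m0|mp].
  move: ht hd hm; rewrite m0 drop0 => _ hd _.
  case: (posnP (size u)) => [/size0nil -> | hn].
    by rewrite /asc big_ord0 /=; apply/orP; left; apply/andP; split=> //; apply/existsP; exists ord0.
  apply/orP; right; apply/orP; left; apply/andP; split.
    by apply/existsP; exists ord0; rewrite /= take0 drop0 hd.
  by rewrite asc_ascl asclS // addn0 prednK.
case: (ltngtP m (size u)) hm => // hm _; last first.
  apply/orP; left; apply/andP; split; last first.
    by rewrite asc_ascl ascl0; [rewrite hm | move: ht; rewrite hm take_size].
  apply/existsP; exists (Ordinal (ltnSn (size u))) => /=.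
  rewrite -hm ht /=; apply: sorted_small; rewrite size_drop; lia.
set p := nth ord0 u m.-1; set q := nth ord0 u m.
have et : take m u = rcons (take m.-1 u) p.
  by rewrite /p -(take_nth ord0) ?prednK //; lia.
have ed : drop m u = q :: drop m.+1 u by rewrite (drop_nth ord0).
have ed' : drop m.-1 u = p :: drop m u.
  by rewrite (drop_nth ord0) ?prednK //; lia.
case: (ltngtP (rk (supp u) p) (rk (supp u) q)) => h.
- have hd' : sorted (ltI u) (drop m.-1 u).
    by rewrite ed' ed /=; move: hd; rewrite ed /= => ->; rewrite andbT; exact: h.
  apply/orP; left; apply/andP; split.
    by apply/existsP; exists (Ordinal (ltnW hm : (m < (size u).+1)%N)) ; rewrite /= ht hd'.
  by rewrite (asc_hookV mp (ltnW hm) ht hd'); apply/eqP; lia.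
- have ht' : sorted (gtI u) (take m.+1 u).
    rewrite (take_nth ord0) // et; apply: sorted_rcons2; first by rewrite -et.
    by rewrite /gtI /ltI.
  have hd' : sorted (ltI u) (drop m.+1.-1 u) by [].
  apply/orP; right; apply/orP; left; apply/andP; split.
    by apply/existsP; exists (Ordinal (hm : (m.+1 < (size u).+1)%N)); rewrite /= ht' hd.
  by rewrite (asc_hookV (ltn0Sn m) hm ht' hd'); apply/eqP; lia.
- have epq : p = q by apply: (rk_inj nT).
  apply/orP; right; apply/orP; right; apply/andP; split.
    by apply/existsP; exists (Ordinal hm); rewrite /= mp -/p -/q epq eqxx ht hd.
  by rewrite (asc_hookU mp hm epq ht hd); apply/eqP; lia.
Qed.

Lemma count3 u m i : (size u <= k)%N -> (m + i)%N = size u ->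
  ((hookV u && (asc u == i)) + (hookV u && ((asc u).+1 == i)) + (hookU u && ((asc u).+1 == i)))%N
  = SC m u.
Proof.
move=> hk e.
have E1 : (asc u == i) = (asc u + m == size u)%N by apply/eqP/eqP; lia.
have E2 : ((asc u).+1 == i) = ((asc u).+1 + m == size u)%N by apply/eqP/eqP; lia.
rewrite E1 E2.
case hS: (SC m u).
  have hm : (m <= size u)%N by lia.
  have := SC_hook hk hm hS.
  case hV: (hookV u); case hU: (hookU u) => //=.
  - by exfalso; apply: (@hookVU u); rewrite ?hV ?hU.
  - by case: eqP => h1; case: eqP => h2 //=; lia.
  - by case: eqP => h1 //=.
case hV: (hookV u); case hU: (hookU u) => //=.
- by exfalso; apply: (@hookVU u); rewrite ?hV ?hU.
- case: eqP => h1; first by rewrite (SC_V1 hV h1) in hS.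
  by case: eqP => h2 //; rewrite (SC_V2 hV h2) in hS.
- by case: eqP => h2 //; rewrite (SC_U hU h2) in hS.
Qed.

End Hook.
Section Pairs.
Variable k : nat.
Implicit Types (A B : {set 'I_k.+1}) (x : word k).

Lemma supp_Wd A B : supp (Wd A B) = A :|: B.
Proof. by apply/setP => y; rewrite !inE mem_cat mem_rev !mem_dec. Qed.

Lemma size_Wd A B : size (Wd A B) = (#|A| + #|B|)%N.
Proof. by rewrite /Wd size_cat size_rev !size_dec. Qed.

Lemma SC_Wd A B : (#|A :|: B| <= k)%N -> SC #|A| (Wd A B).
Proof.
move=> hc; have nT := proper_card hc.
rewrite /SC {1 3}/Wd take_size_cat ?size_dec // drop_size_cat ?size_dec //.
rewrite /gtI /ltI supp_Wd; apply/andP; split; first exact: sorted_dec_lt.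
by rewrite rev_sorted; exact: sorted_dec_lt.
Qed.

Lemma Wd_SC x m : (size x <= k)%N -> (m <= size x)%N -> SC m x ->
  [/\ #|[set y in take m x]| = m, #|[set y in drop m x]| = (size x - m)%N
    & Wd [set y in take m x] [set y in drop m x] = x].
Proof.
move=> hk hm /andP[ht hd].
set A := [set y in take m x]; set B := [set y in drop m x].
have eS : A :|: B = supp x.
  by apply/setP => y; rewrite !inE -mem_cat cat_take_drop.
have nT : supp x != setT by apply: proper_card; apply: leq_trans (card_supp x) hk.
have ut : uniq (take m x) := sorted_uniq (@gtI_trans k x) (@gtI_irr k x) ht.
have ud : uniq (drop m x) := sorted_uniq (@ltI_trans k x) (@ltI_irr k x) hd.
have tr : transitive (keyle (supp x)).
  by move=> b a c; rewrite /keyle => h1 h2; apply: leq_trans h2 h1.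
have an : antisymmetric (keyle (supp x)).
  by move=> a b /andP[h1 h2]; apply: (rk_inj nT); apply/eqP; rewrite eqn_leq; apply/andP; split.
have e1 : dec (supp x) A = take m x.
  apply: (sorted_eq tr an); first exact: sorted_dec.
    by apply: sub_sorted ht => a b; rewrite /gtI /ltI /keyle => /ltnW.
  apply: perm_trans (perm_dec _ _) _; apply: uniq_perm; rewrite ?enum_uniq //.
  by move=> y; rewrite mem_enum inE.
have e2 : dec (supp x) B = rev (drop m x).
  apply: (sorted_eq tr an); first exact: sorted_dec.
    by rewrite rev_sorted; apply: sub_sorted hd => a b; rewrite /ltI /keyle => /ltnW.
  apply: perm_trans (perm_dec _ _) _; apply: uniq_perm; rewrite ?enum_uniq ?rev_uniq //.
  by move=> y; rewrite mem_enum inE mem_rev.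
split.
- by rewrite cardsE (card_uniqP ut) size_takel.
- by rewrite cardsE (card_uniqP ud) size_drop.
by rewrite /Wd eS e1 e2 revK cat_take_drop.
Qed.

Lemma Wd_inj A B x : Wd A B = x -> A = [set y in take #|A| x] /\ B = [set y in drop #|A| x].
Proof.
move=> <-; rewrite /Wd take_size_cat ?size_dec // drop_size_cat ?size_dec //.
by split; apply/setP => y; rewrite inE ?mem_rev mem_dec.
Qed.

Lemma coef_fwords (ws : seq (word k)) w : coef (fwords ws) w = Posz (count (pred1 w) ws).
Proof.
elim: ws => [|u ws IH]; first by rewrite /coef big_nil.
move: IH; rewrite /coef /= big_cons => ->.
by rewrite PoszD; case: (u == w).
Qed.

Lemma count_tuples r (Q : pred (r.-tuple 'I_k.+1)) (P : pred (word k)) x :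
  (forall t, Q t = P (val t)) ->
  count (pred1 x) [seq val t | t <- enum Q]
  = ((size x == r) && P x).
Proof.
move=> HQ.
rewrite count_uniq_mem; last by rewrite (map_inj_uniq val_inj) enum_uniq.
case: (size x =P r) => [e|ne] /=.
  have -> : x = val (@Tuple r _ x (introT eqP e)) by [].
  rewrite (mem_map val_inj) mem_enum; have := HQ (Tuple (introT eqP e)); rewrite /= => <-; by [].
rewrite (_ : _ \in _ = false) //; apply/negP => /mapP [t _ ext]; case: ne; by rewrite ext size_tuple.
Qed.

Lemma fmul_fwords (T1 T2 : Type) (L1 : seq T1) (L2 : seq T2) f g :
  fmul (fwords (map f L1)) (fwords (map g L2)) =
  fwords [seq f p.1 ++ g p.2 | p <- [seq (a, b) | a <- L1, b <- L2]] :> fsum k.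
Proof.
elim: L1 => [|a L1 IH] //=.
rewrite /fmul /= -/(fmul _ _) IH /fwords !map_cat; congr (_ ++ _).
by rewrite -!map_comp; apply: eq_map => b /=; rewrite mul1r.
Qed.

End Pairs.

Lemma count_one (T : eqType) (s : seq T) (P : pred T) p0 : uniq s ->
  (forall p, p \in s -> P p -> p = p0) -> count P s = ((p0 \in s) && P p0).
Proof.
elim: s => [|a s IH] //= /andP[na us] H.
have IH' := IH us (fun p hp => H p (@mem_behead _ (a :: s) p hp)).
case Pa: (P a).
  have ea := H a (mem_head _ _) Pa; subst p0.
  by rewrite IH' (negbTE na) mem_head Pa.
rewrite IH' in_cons; case: (p0 =P a) => [e|] //=.
by rewrite e Pa andbF.
Qed.

Lemma eqz_sub1 (n i : nat) : ((Posz n == Posz i - 1)%R) = (n.+1 == i).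
Proof. by rewrite eq_sym subr_eq -PoszD eqz_nat addn1 eq_sym. Qed.

Unset Implicit Arguments.
Set Strict Implicit.
Local Open Scope ring_scope.

Theorem lemma7p4 (k r i : nat) (hir : (i <= r)%N) (hrk : (r <= k)%N) :
  eqA (fmul (ncsym_h k (r - i)) (ncsym_e k i))
      (fadd (Vset k r i%:Z) (fadd (Vset k r (i%:Z - 1)) (Uset k r (i%:Z - 1)))).
Proof.
set m := (r - i)%N.
set P1 := [pred A : {set 'I_k.+1} | #|A| == m].
set P2 := [pred A : {set 'I_k.+1} | #|A| == i].
set PL := [seq (a, b) | a <- enum P1, b <- enum P2].
have memPL p : (p \in PL) = (#|p.1| == m) && (#|p.2| == i).
  apply/idP/idP.
    by case/allpairsP => [[a b] [/= ha hb ->]]; move: ha hb; rewrite !mem_enum => ha hb; apply/andP.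
  by case: p => a b /andP[ha hb]; apply: allpairs_f; rewrite mem_enum.
rewrite /ncsym_h /ncsym_e fmul_fwords.
apply: (@eqA_trans _ _ (fwords [seq Wd p.1 p.2 | p <- PL])).
  apply: eqA_map => p; rewrite memPL => /andP[/eqP h1 /eqP h2].
  apply: conv_LW; rewrite cardsU h1 h2; lia.
apply: eqA_coef => x.
rewrite /fadd !coef_cat !coef_fwords /Vset /Uset.
rewrite (@count_tuples k r _ (fun u => [&& proper_supp u, hookV u & Posz (asc u) == Posz i])) //.
rewrite (@count_tuples k r _ (fun u => [&& proper_supp u, hookV u & Posz (asc u) == Posz i - 1])) //.
rewrite (@count_tuples k r _ (fun u => [&& proper_supp u, hookU u & Posz (asc u) == Posz i - 1])) //.
rewrite -!PoszD; congr Posz.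
rewrite count_map.
have uPL : uniq PL by apply: allpairs_uniq; rewrite ?enum_uniq //; move=> [? ?] [? ?].
rewrite (@count_one _ _ _ ([set y in take m x], [set y in drop m x])) //; last first.
  move=> [a b]; rewrite memPL /= => /andP[/eqP ha _] /eqP /Wd_inj.
  by rewrite ha => -[-> ->].
rewrite memPL /= !eqz_nat !eqz_sub1.
case: (size x =P r) => hs /=; last first.
  rewrite (_ : _ && _ = false) //; apply/negP => /andP[/andP[/eqP h1 /eqP h2] /eqP e].
  by case: hs; rewrite -e size_Wd h1 h2; lia.
have hk : (size x <= k)%N by rewrite hs.
have -> : proper_supp x by apply: proper_card; apply: leq_trans (card_supp x) hk.
rewrite /= addnA (@count3 k x m i hk); last by rewrite hs; lia.
congr (nat_of_bool _); apply/idP/idP.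
  move=> /andP[/andP[/eqP h1 /eqP h2] /eqP e].
  have := @SC_Wd k [set y in take m x] [set y in drop m x].
  rewrite e h1 => H; apply: H.
  by rewrite cardsU h1 h2; lia.
move=> hS; have [h1 h2 h3] := @Wd_SC k x m ltac:(lia) ltac:(lia) hS.
by rewrite h1 h2 h3 hs !eqxx; apply/eqP; lia.
Qed.
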